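(* Let $G>0$, $T>0$, and let $F\colon\mathbb R\to\mathbb R$ be continuous and $T$-periodic. There exists $a_0\in(0,1)$ such that for every $a$ with $a_0\le a<1$, the set $\mathbb R\times\Gamma_a$ is a bound set for $v_\lambda$ for all $\lambda\in[0,1]$.
   Context: For $\lambda\in[0,1]$ consider on $\mathbb R\times\Omega$, $\Omega=(-1,1)\times\mathbb R$, the system $\dot t=1$, $\dot x=p$, $\dot p=\big(G\sqrt{1-x^2}-\frac{p^2}{1-x^2}\big)x-\lambda(1-x^2)F(t)$, with right-hand side $v_\lambda(t,x,p)$; its solutions are unique, giving a local flow $\phi^\lambda$. For $0<a<1$, $\Gamma_a=\{(x,p)\in\mathbb R^2:|x|\le a\}$. For a closed set $E\subset\mathbb R\times\Omega$, $E$ is a bound set for $v_\lambda$ if for every $\epsilon>0$ there is no point $z\in\partial E$ with $\phi^\lambda_s(z)\in E$ for all $s\in(-\epsilon,\epsilon)$. *)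

(* Defs.v *)
From Stdlib Require Import Reals.
From Coquelicot Require Import Coquelicot.
Open Scope R_scope.

Definition pt := (R * R * R)%type.
Definition pt_t (z : pt) : R := fst (fst z).
Definition pt_x (z : pt) : R := snd (fst z).
Definition pt_p (z : pt) : R := snd z.

Definition inOmega (z : pt) : Prop := -1 < pt_x z < 1.

Definition vp (G lam : R) (F : R -> R) (t x p : R) : R :=
  (G * sqrt (1 - x ^ 2) - p ^ 2 / (1 - x ^ 2)) * x - lam * (1 - x ^ 2) * F t.

(* (tt, xx, pp) is a solution of  t' = 1, x' = p, p' = vp ...  on (-eps, eps)
   staying in R x Omega, with initial value z at s = 0.  Since solutions of
   v_lambda are unique, phi^lambda_s(z) is defined for s in (-eps,eps) iff such a
   solution exists, and then phi^lambda_s(z) = (tt s, xx s, pp s). *)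
Definition is_solution_on (G lam : R) (F : R -> R) (eps : R) (z : pt)
    (tt xx pp : R -> R) : Prop :=
  tt 0 = pt_t z /\ xx 0 = pt_x z /\ pp 0 = pt_p z /\
  forall s, -eps < s < eps ->
    inOmega (tt s, xx s, pp s) /\
    is_derive tt s 1 /\
    is_derive xx s (pp s) /\
    is_derive pp s (vp G lam F (tt s) (xx s) (pp s)).

Definition pdist (z w : pt) : R :=
  Rmax (Rabs (pt_t z - pt_t w)) (Rmax (Rabs (pt_x z - pt_x w)) (Rabs (pt_p z - pt_p w))).

Definition rel_closed (E : pt -> Prop) : Prop :=
  (forall z, E z -> inOmega z) /\
  forall z, inOmega z -> (forall r, 0 < r -> exists w, pdist w z < r /\ E w) -> E z.

Definition in_boundary (E : pt -> Prop) (z : pt) : Prop :=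
  inOmega z /\
  forall r, 0 < r ->
    (exists w, pdist w z < r /\ E w) /\
    (exists w, pdist w z < r /\ inOmega w /\ ~ E w).

Definition bound_set (G lam : R) (F : R -> R) (E : pt -> Prop) : Prop :=
  rel_closed E /\
  forall eps, 0 < eps ->
    ~ exists z, in_boundary E z /\
      exists tt xx pp, is_solution_on G lam F eps z tt xx pp /\
        forall s, -eps < s < eps -> E (tt s, xx s, pp s).

Definition RxGamma (a : R) (z : pt) : Prop := Rabs (pt_x z) <= a.

(* Main.v *)
Require Import Defs.
From Stdlib Require Import Reals Lra.
From Coquelicot Require Import Coquelicot.
Open Scope R_scope.

Lemma abs_le_iff (x a : R) : Rabs x <= a -> -a <= x <= a.
Proof. unfold Rabs; destruct Rcase_abs; lra. Qed.

Lemma abs_lt_iff (x a : R) : Rabs x < a -> -a < x < a.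
Proof. unfold Rabs; destruct Rcase_abs; lra. Qed.

Lemma abs_cases (x : R) : x = Rabs x \/ x = - Rabs x.
Proof. unfold Rabs; destruct Rcase_abs; lra. Qed.

Lemma sign_pos (f : R -> R) c L : derivable_pt_lim f c L -> 0 < L ->
  exists d, 0 < d /\ forall h, 0 < h < d -> f c < f (c + h) /\ f (c - h) < f c.
Proof.
  intros H HL. destruct (H L HL) as [d Hd]. exists d. split; [apply cond_pos|].
  intros h Hh. split.
  - assert (Hh1 : h <> 0) by lra.
    assert (Hh2 : Rabs h < d) by (rewrite Rabs_right; lra).
    specialize (Hd h Hh1 Hh2).
    apply abs_lt_iff in Hd.
    set (q := (f (c + h) - f c) / h) in *.
    assert (E : f (c + h) - f c = q * h) by (unfold q; field; lra).
    nra.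
  - assert (Hh1 : -h <> 0) by lra.
    assert (Hh2 : Rabs (-h) < d) by (rewrite Rabs_left; lra).
    specialize (Hd (-h) Hh1 Hh2).
    apply abs_lt_iff in Hd.
    set (q := (f (c + - h) - f c) / - h) in *.
    assert (E : f (c + - h) - f c = q * (-h)) by (unfold q; field; lra).
    replace (c - h) with (c + - h) by ring.
    nra.
Qed.

Lemma sign_neg (f : R -> R) c L : derivable_pt_lim f c L -> L < 0 ->
  exists d, 0 < d /\ forall h, 0 < h < d -> f (c + h) < f c /\ f c < f (c - h).
Proof.
  intros H HL. destruct (H (-L) ltac:(lra)) as [d Hd]. exists d. split; [apply cond_pos|].
  intros h Hh. split.
  - assert (Hh1 : h <> 0) by lra.
    assert (Hh2 : Rabs h < d) by (rewrite Rabs_right; lra).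
    specialize (Hd h Hh1 Hh2).
    apply abs_lt_iff in Hd.
    set (q := (f (c + h) - f c) / h) in *.
    assert (E : f (c + h) - f c = q * h) by (unfold q; field; lra).
    nra.
  - assert (Hh1 : -h <> 0) by lra.
    assert (Hh2 : Rabs (-h) < d) by (rewrite Rabs_left; lra).
    specialize (Hd (-h) Hh1 Hh2).
    apply abs_lt_iff in Hd.
    set (q := (f (c + - h) - f c) / - h) in *.
    assert (E : f (c + - h) - f c = q * (-h)) by (unfold q; field; lra).
    replace (c - h) with (c + - h) by ring.
    nra.
Qed.

Lemma periodic_nat (F : R -> R) T : (forall t, F (t + T) = F t) ->
  forall n x, F (x + INR n * T) = F x.
Proof.
  intros HP n; induction n as [|n IH]; intros x.
  - simpl. f_equal; ring.
  - rewrite S_INR. replace (x + (INR n + 1) * T) with ((x + INR n * T) + T) by ring.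
    rewrite HP. apply IH.
Qed.

Lemma periodic_Z (F : R -> R) T : (forall t, F (t + T) = F t) ->
  forall k x, F (x + IZR k * T) = F x.
Proof.
  intros HP k x. destruct k as [|p|p].
  - simpl. f_equal; ring.
  - rewrite <- Znat.positive_nat_Z, <- INR_IZR_INZ. apply periodic_nat; auto.
  - change (Z.neg p) with (Z.opp (Z.pos p)). rewrite opp_IZR.
    rewrite <- Znat.positive_nat_Z, <- INR_IZR_INZ.
    rewrite <- (periodic_nat F T HP (Pos.to_nat p) (x + - INR (Pos.to_nat p) * T)).
    f_equal; ring.
Qed.

Lemma bounded (F : R -> R) T : 0 < T -> (forall t, continuity_pt F t) ->
  (forall t, F (t + T) = F t) -> exists M, 0 < M /\ forall t, Rabs (F t) <= M.
Proof.
  intros HT Hc HP.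
  destruct (continuity_ab_maj F 0 T ltac:(lra) (fun c _ => Hc c)) as [Mx [HMx _]].
  destruct (continuity_ab_min F 0 T ltac:(lra) (fun c _ => Hc c)) as [mx [Hmx _]].
  exists (Rmax (Rabs (F Mx)) (Rabs (F mx)) + 1). split.
  - pose proof (Rmax_l (Rabs (F Mx)) (Rabs (F mx))). pose proof (Rabs_pos (F Mx)). lra.
  - intros t.
    set (k := (up (t / T) - 1)%Z).
    assert (Hk : 0 <= t - IZR k * T <= T).
    { destruct (archimed (t / T)) as [A1 A2]. unfold k. rewrite minus_IZR.
      assert (E : t = (t / T) * T) by (field; lra).
      split; nra. }
    replace t with ((t - IZR k * T) + IZR k * T) by ring.
    rewrite periodic_Z by auto.
    pose proof (HMx _ Hk). pose proof (Hmx _ Hk).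
    pose proof (Rmax_l (Rabs (F Mx)) (Rabs (F mx))).
    pose proof (Rmax_r (Rabs (F Mx)) (Rabs (F mx))).
    pose proof (Rle_abs (F Mx)). pose proof (Rabs_maj2 (F mx)).
    apply Rabs_le. lra.
Qed.

Theorem lemma3p1 (G T : R) (F : R -> R) :
  0 < G -> 0 < T ->
  (forall t, continuity_pt F t) ->
  (forall t, F (t + T) = F t) ->
  exists a0, 0 < a0 < 1 /\
    forall a, a0 <= a < 1 ->
      forall lam, 0 <= lam <= 1 -> bound_set G lam F (RxGamma a).
Proof.
  intros HG HT Hc HP.
  destruct (bounded F T HT Hc HP) as [M [HM HFM]].
  set (g := G / (2 * M)).
  assert (Hg : 0 < g) by (unfold g; apply Rdiv_lt_0_compat; lra).
  set (c := g * g).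
  assert (Hcpos : 0 < c) by (unfold c; nra).
  exists (Rmax (1/2) (1 - c/4)). split.
  { split. pose proof (Rmax_l (1/2) (1 - c/4)); lra.
    apply Rmax_lub_lt; lra. }
  intros a [Ha0 Ha1] lam Hlam.
  pose proof (Rmax_l (1/2) (1 - c/4)). pose proof (Rmax_r (1/2) (1 - c/4)).
  assert (Ha2 : 1 - a ^ 2 < c) by nra.
  assert (Hpos : 0 < 1 - a ^ 2) by nra.
  set (s := sqrt (1 - a ^ 2)).
  assert (Hss : s * s = 1 - a ^ 2) by (apply sqrt_sqrt; lra).
  assert (Hs0 : 0 < s) by (apply sqrt_lt_R0; lra).
  assert (Hsg : s < g).
  { destruct (Rlt_or_le s g) as [?|Hle]; auto.
    assert (g * g <= s * s) by (apply Rmult_le_compat; lra). unfold c in Ha2. lra. }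
  assert (HsM : s * (2 * M) < G).
  { unfold g in Hsg. apply Rmult_lt_compat_r with (r := 2 * M) in Hsg; [|lra].
    replace (G / (2 * M) * (2 * M)) with G in Hsg by (field; lra). lra. }
  assert (Hvp1 : forall t, vp G lam F t a 0 > 0).
  { intros t. unfold vp. fold s.
    replace (0 ^ 2 / (1 - a ^ 2)) with 0 by (unfold Rdiv; ring).
    rewrite <- Hss.
    pose proof (HFM t) as Ht. apply abs_le_iff in Ht.
    assert (lam * F t <= M) by nra.
    assert (s * s * (lam * F t) <= s * s * M) by (apply Rmult_le_compat_l; nra).
    assert (s * (s * M) < s * (G / 2)) by (apply Rmult_lt_compat_l; lra).
    assert (0 < s * G) by (apply Rmult_lt_0_compat; lra).
    assert (s * G / 2 <= s * G * a) by (assert (1/2 <= a) by lra; nra).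
    nra. }
  assert (Hvp2 : forall t, vp G lam F t (- a) 0 < 0).
  { intros t. unfold vp.
    replace (1 - (- a) ^ 2) with (1 - a ^ 2) by ring. fold s.
    replace (0 ^ 2 / (1 - a ^ 2)) with 0 by (unfold Rdiv; ring).
    rewrite <- Hss.
    pose proof (HFM t) as Ht. apply abs_le_iff in Ht.
    assert (- M <= lam * F t) by nra.
    assert (s * s * (- M) <= s * s * (lam * F t)) by (apply Rmult_le_compat_l; nra).
    assert (s * (s * M) < s * (G / 2)) by (apply Rmult_lt_compat_l; lra).
    assert (0 < s * G) by (apply Rmult_lt_0_compat; lra).
    assert (s * G / 2 <= s * G * a) by (assert (1/2 <= a) by lra; nra).
    nra. }
  split.
  - split.
    + intros z Hz. unfold RxGamma, inOmega in *. apply abs_le_iff in Hz. lra.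
    + intros z _ Hcl. unfold RxGamma.
      destruct (Rle_or_lt (Rabs (pt_x z)) a) as [?|Hlt]; auto.
      destruct (Hcl (Rabs (pt_x z) - a) ltac:(lra)) as [w [Hw Ew]].
      unfold pdist, RxGamma in *.
      pose proof (Rmax_r (Rabs (pt_t w - pt_t z)) (Rmax (Rabs (pt_x w - pt_x z)) (Rabs (pt_p w - pt_p z)))).
      pose proof (Rmax_l (Rabs (pt_x w - pt_x z)) (Rabs (pt_p w - pt_p z))).
      pose proof (Rabs_triang_inv (pt_x z) (pt_x w)).
      rewrite (Rabs_minus_sym (pt_x z)) in *. lra.
  - intros eps Heps [z [[Hz Hb] [tt [xx [pp [[H0t [H0x [H0p Hsol]]] HE]]]]]].
    assert (HE' : forall s, -eps < s < eps -> -a <= xx s <= a).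
    { intros s0 Hs0'. apply abs_le_iff. exact (HE s0 Hs0'). }
    assert (Hbd : a <= Rabs (pt_x z)).
    { destruct (Rle_or_lt a (Rabs (pt_x z))) as [?|Hlt]; auto.
      destruct (Hb (a - Rabs (pt_x z)) ltac:(lra)) as [_ [w [Hw [_ NEw]]]].
      exfalso; apply NEw. unfold pdist, RxGamma in *.
      pose proof (Rmax_r (Rabs (pt_t w - pt_t z)) (Rmax (Rabs (pt_x w - pt_x z)) (Rabs (pt_p w - pt_p z)))).
      pose proof (Rmax_l (Rabs (pt_x w - pt_x z)) (Rabs (pt_p w - pt_p z))).
      pose proof (Rabs_triang_inv (pt_x w) (pt_x z)). lra. }
    assert (Hx0 : xx 0 = a \/ xx 0 = - a).
    { pose proof (HE 0 ltac:(lra)) as HE0. unfold RxGamma, pt_x in HE0; simpl in HE0.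
      rewrite H0x in *. destruct (abs_cases (pt_x z)); [left|right]; lra. }
    assert (Dx : forall s, -eps < s < eps -> derivable_pt_lim xx s (pp s)).
    { intros s0 Hs0'. apply is_derive_Reals. apply (Hsol s0 Hs0'). }
    assert (Dp : forall s, -eps < s < eps ->
               derivable_pt_lim pp s (vp G lam F (tt s) (xx s) (pp s))).
    { intros s0 Hs0'. apply is_derive_Reals. apply (Hsol s0 Hs0'). }
    assert (Hp0 : pp 0 = 0).
    { destruct (Rtotal_order (pp 0) 0) as [Hn|[?|Hpp]]; auto; exfalso.
      - destruct (sign_neg xx 0 (pp 0) (Dx 0 ltac:(lra)) Hn) as [d [Hd Hdd]].
        set (h := Rmin d eps / 2).
        assert (0 < h < d /\ h < eps) by
          (unfold h; pose proof (Rmin_l d eps); pose proof (Rmin_r d eps);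
           pose proof (Rmin_glb_lt d eps 0 Hd Heps); lra).
        destruct (Hdd h ltac:(lra)) as [A1 A2].
        rewrite Rplus_0_l in A1. rewrite Rminus_0_l in A2.
        pose proof (HE' h ltac:(lra)). pose proof (HE' (-h) ltac:(lra)).
        destruct Hx0; lra.
      - destruct (sign_pos xx 0 (pp 0) (Dx 0 ltac:(lra)) Hpp) as [d [Hd Hdd]].
        set (h := Rmin d eps / 2).
        assert (0 < h < d /\ h < eps) by
          (unfold h; pose proof (Rmin_l d eps); pose proof (Rmin_r d eps);
           pose proof (Rmin_glb_lt d eps 0 Hd Heps); lra).
        destruct (Hdd h ltac:(lra)) as [A1 A2].
        rewrite Rplus_0_l in A1. rewrite Rminus_0_l in A2.
        pose proof (HE' h ltac:(lra)). pose proof (HE' (-h) ltac:(lra)).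
        destruct Hx0; lra. }
    destruct Hx0 as [Hxa|Hxa].
    + assert (L : vp G lam F (tt 0) (xx 0) (pp 0) > 0) by (rewrite Hxa, Hp0; apply Hvp1).
      destruct (sign_pos pp 0 _ (Dp 0 ltac:(lra)) L) as [d [Hd Hdd]].
      set (h := Rmin d eps / 2).
      assert (0 < h < d /\ h < eps) by
        (unfold h; pose proof (Rmin_l d eps); pose proof (Rmin_r d eps);
         pose proof (Rmin_glb_lt d eps 0 Hd Heps); lra).
      destruct (MVT_cor2 xx pp 0 h ltac:(lra) (fun c0 Hc0 => Dx c0 ltac:(lra)))
        as [c0 [Ec Hc0]].
      destruct (Hdd c0 ltac:(lra)) as [A1 _]. rewrite Rplus_0_l, Hp0 in A1.
      pose proof (HE' h ltac:(lra)). nra.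
    + assert (L : vp G lam F (tt 0) (xx 0) (pp 0) < 0) by (rewrite Hxa, Hp0; apply Hvp2).
      destruct (sign_neg pp 0 _ (Dp 0 ltac:(lra)) L) as [d [Hd Hdd]].
      set (h := Rmin d eps / 2).
      assert (0 < h < d /\ h < eps) by
        (unfold h; pose proof (Rmin_l d eps); pose proof (Rmin_r d eps);
         pose proof (Rmin_glb_lt d eps 0 Hd Heps); lra).
      destruct (MVT_cor2 xx pp 0 h ltac:(lra) (fun c0 Hc0 => Dx c0 ltac:(lra)))
        as [c0 [Ec Hc0]].
      destruct (Hdd c0 ltac:(lra)) as [A1 _]. rewrite Rplus_0_l, Hp0 in A1.
      pose proof (HE' h ltac:(lra)). nra.
Qed.
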